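(* Neither the VCCR $scwc$ nor the VSCC $\overline{scwc}$ satisfies Coherent IIA.
   Context: Profiles: $\mathbf P:V\to\mathcal L(X)$, $V$ nonempty finite set of voters, $X=X(\mathbf P)$ nonempty finite set of candidates, $\mathcal L(X)$ strict linear orders; $\mathbf P_{|Y}$ restricts each ballot to $Y$. $\mathrm{Margin}_{\mathbf P}(x,y)$ = #voters ranking $x$ above $y$ minus #ranking $y$ above $x$. $\mathcal M(\mathbf P)$: directed graph on $X(\mathbf P)$ with edge $x\to y$ of weight $\mathrm{Margin}_{\mathbf P}(x,y)$ when positive. Majority path: sequence with positive consecutive margins; strength = minimum. $(x,y)\in sc(\mathbf P)$ iff $\mathrm{Margin}_{\mathbf P}(x,y)>0$ exceeds the strength of every majority path from $y$ to $x$; $(x,y)\in wc(\mathbf P)$ iff $\mathrm{Margin}_{\mathbf P}(x,y)>0$ and $\mathrm{Margin}_{\mathbf P}(x,z)\ge\mathrm{Margin}_{\mathbf P}(y,z)$ for all $z$; $scwc(\mathbf P)=sc(\mathbf P)\cup wc(\mathbf P)$; $\overline{scwc}(\mathbf P)$ is the set of candidates not defeated in $scwc(\mathbf P)$. Write $\mathbf P\rightsquigarrow_{x,y}\mathbf P'$ if $\mathbf P_{|\{x,y\}}=\mathbf P'_{|\{x,y\}}$ and $\mathcal M(\mathbf P')$ is obtainable from $\mathcal M(\mathbf P)$ by deleting zero or more candidates other than $x,y$ and deleting or reducing weights of zero or more edges not connecting $x$ and $y$. A VCCR $f$ satisfies Coherent IIA if $(x,y)\in f(\mathbf P)$ and $\mathbf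 P\rightsquigarrow_{x,y}\mathbf P'$ imply $(x,y)\in f(\mathbf P')$. A VSCC $F$ satisfies Coherent IIA if for every $\mathbf P$ and $y\notin F(\mathbf P)$ there is $x\in X(\mathbf P)$ with $y\notin F(\mathbf P')$ for all $\mathbf P'$ with $\mathbf P\rightsquigarrow_{x,y}\mathbf P'$. *)

(* Defs.v *)
From mathcomp Require Import all_boot all_order all_algebra.
Set Implicit Arguments. Unset Strict Implicit. Unset Printing Implicit Defensive.
Import Order.TTheory GRing.Theory Num.Theory.
Local Open Scope ring_scope.

(* A profile: nonempty finite voter set V, nonempty finite candidate set X,
   and for every voter a strict linear order on X.
   [ballot P i a b] means voter i ranks a above b (only meaningful on V x X x X). *)
Record profile := Profile {
  voters : seq nat;
  cands : seq nat;
  ballot : nat -> rel nat;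
  voters_uniq : uniq voters;
  voters_nonempty : voters != [::];
  cands_uniq : uniq cands;
  cands_nonempty : cands != [::];
  ballot_irr : forall i a, i \in voters -> a \in cands -> ~~ ballot i a a;
  ballot_trans : forall i a b c, i \in voters -> a \in cands -> b \in cands ->
     c \in cands -> ballot i a b -> ballot i b c -> ballot i a c;
  ballot_total : forall i a b, i \in voters -> a \in cands -> b \in cands ->
     a != b -> ballot i a b || ballot i b a
}.

(* Margin_P(a,b) (set to 0 when a or b is not a candidate of P). *)
Definition margin (P : profile) (a b : nat) : int :=
  if (a \in cands P) && (b \in cands P) then
    (count (fun i => ballot P i a b) (voters P))%:Z
    - (count (fun i => ballot P i b a) (voters P))%:Z
  else 0.

(* A majority path a = a_0, a_1, ..., a_n = b (n >= 1) given as a :: s. *)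
Definition majority_path (P : profile) (a : nat) (s : seq nat) (b : nat) : Prop :=
  [/\ a \in cands P, all (fun c => c \in cands P) s,
      path (fun u v => 0 < margin P u v) a s, s != [::] & last a s = b].

Definition strength (P : profile) (a : nat) (s : seq nat) : int :=
  let ms := pairmap (margin P) a s in foldr Num.min (head 0 ms) ms.

Definition sc (P : profile) (x y : nat) : Prop :=
  0 < margin P x y /\
  forall s, majority_path P y s x -> strength P y s < margin P x y.

Definition wc (P : profile) (x y : nat) : Prop :=
  0 < margin P x y /\
  forall z, z \in cands P -> margin P y z <= margin P x z.

Definition scwc (P : profile) (x y : nat) : Prop := sc P x y \/ wc P x y.

Definition scwc_bar (P : profile) (y : nat) : Prop :=
  y \in cands P /\ ~ (exists x, scwc P x y).

Definition restr_eq (P P' : profile) (x y : nat) : Prop :=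
  [/\ voters P =i voters P',
      (x \in cands P) = (x \in cands P'),
      (y \in cands P) = (y \in cands P') &
      forall i a b, i \in voters P -> a \in [:: x; y] -> b \in [:: x; y] ->
        a \in cands P -> b \in cands P -> ballot P i a b = ballot P' i a b].

(* M(P') obtained from M(P) by deleting candidates other than x, y and deleting
   or reducing weights of edges not connecting x and y. *)
Definition graph_obtainable (P P' : profile) (x y : nat) : Prop :=
  [/\ {subset cands P' <= cands P},
      margin P' x y = margin P x y,
      margin P' y x = margin P y x &
      forall a b, 0 < margin P' a b -> margin P' a b <= margin P a b].

Definition transition (P : profile) (x y : nat) (P' : profile) : Prop :=
  restr_eq P P' x y /\ graph_obtainable P P' x y.

Definition VCCR := profile -> nat -> nat -> Prop.
Definition VSCC := profile -> nat -> Prop.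

Definition coherent_IIA_VCCR (f : VCCR) : Prop :=
  forall P P' x y, f P x y -> transition P x y P' -> f P' x y.

Definition coherent_IIA_VSCC (F : VSCC) : Prop :=
  forall P y, y \in cands P -> ~ F P y ->
    exists x, x \in cands P /\
      forall P', transition P x y P' -> ~ F P' y.

(* Main.v *)
Require Import Defs.
From mathcomp Require Import all_boot all_order all_algebra.
Set Implicit Arguments. Unset Strict Implicit. Unset Printing Implicit Defensive.
Import Order.TTheory GRing.Theory Num.Theory.
Local Open Scope ring_scope.

Definition rb (r : nat -> seq nat) (i : nat) : rel nat :=
  fun a b => (index a (r i) < index b (r i))%N.

Section MK.
Variables (V X : seq nat) (r : nat -> seq nat).
Hypothesis hr : all (fun i => all (fun a => a \in r i) X) V.

Lemma rb_irr i a : i \in V -> a \in X -> ~~ rb r i a a.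
Proof. by move=> _ _; rewrite /rb ltnn. Qed.

Lemma rb_trans i a b c : i \in V -> a \in X -> b \in X ->
  c \in X -> rb r i a b -> rb r i b c -> rb r i a c.
Proof. by move=> _ _ _ _; rewrite /rb; apply: ltn_trans. Qed.

Lemma rb_total i a b : i \in V -> a \in X -> b \in X ->
  a != b -> rb r i a b || rb r i b a.
Proof.
move=> iV aX bX ab; rewrite /rb.
have /allP H := allP hr i iV.
have ai := H a aX; have bi := H b bX.
case: (ltngtP (index a (r i)) (index b (r i))) => //= e.
by move: ab; rewrite -(nth_index 0 ai) -(nth_index 0 bi) e eqxx.
Qed.
End MK.

Definition mkP V X r (hV : uniq V) (hV0 : V != [::]) (hX : uniq X) (hX0 : X != [::])
  (hr : all (fun i => all (fun a => a \in r i) X) V) : profile :=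
  @Profile V X (rb r) hV hV0 hX hX0 (@rb_irr V X r) (@rb_trans V X r) (@rb_total V X r hr).

Definition rk : seq (seq nat) :=
  [:: [:: 0; 1; 2; 3]%N; [:: 3; 2; 0; 1]%N;
      [:: 0; 3; 1; 2]%N; [:: 2; 1; 0; 3]%N;
      [:: 1; 3; 0; 2]%N; [:: 2; 0; 1; 3]%N;
      [:: 3; 2; 0; 1]%N; [:: 1; 0; 3; 2]%N;
      [:: 2; 0; 1; 3]%N; [:: 3; 1; 2; 0]%N;
      [:: 2; 1; 0; 3]%N; [:: 3; 0; 2; 1]%N].
Definition rk' : seq (seq nat) :=
  [:: [:: 0; 1; 2; 3]%N; [:: 3; 2; 0; 1]%N;
      [:: 0; 3; 1; 2]%N; [:: 2; 1; 0; 3]%N;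
      [:: 1; 3; 0; 2]%N; [:: 2; 0; 1; 3]%N;
      [:: 3; 2; 0; 1]%N; [:: 1; 0; 3; 2]%N;
      [:: 2; 0; 1; 3]%N; [:: 3; 1; 2; 0]%N;
      [:: 1; 2; 0; 3]%N; [:: 3; 0; 2; 1]%N].
Definition r1 i := nth [::] rk i.
Definition r2 i := nth [::] rk' i.
Definition VV := iota 0 12.

Definition P0 := @mkP VV [:: 0; 1; 2; 3]%N r1 erefl erefl erefl erefl erefl.
Definition P1 := @mkP VV [:: 0; 1; 2; 3]%N r2 erefl erefl erefl erefl erefl.
Definition Q2 := @mkP VV [:: 1; 2; 3]%N r1 erefl erefl erefl erefl erefl.
Definition Q3 := @mkP VV [:: 1; 3]%N r1 erefl erefl erefl erefl erefl.
Definition Q1 := @mkP VV [:: 1]%N r1 erefl erefl erefl erefl erefl.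


Ltac vmc := vm_compute; reflexivity.
Ltac vmf := vm_compute; let h := fresh in intro h; discriminate h.

Lemma pos_in P a b : 0 < margin P a b -> (a \in cands P) && (b \in cands P).
Proof. by rewrite /margin; case: ifP => //; rewrite ltxx. Qed.

Lemma go_help P P' x y :
  {subset cands P' <= cands P} -> margin P' x y = margin P x y ->
  margin P' y x = margin P y x ->
  all (fun a => all (fun b => (0 < margin P' a b) ==> (margin P' a b <= margin P a b))
     (cands P')) (cands P') -> graph_obtainable P P' x y.
Proof.
move=> h1 h2 h3 h4; split => // a b hp.
case/andP: (pos_in hp) => ha hb.
by have := allP (allP h4 a ha) b hb; rewrite hp.
Qed.

Lemma re_help P P' x y :
  voters P = voters P' ->
  (x \in cands P) = (x \in cands P') -> (y \in cands P) = (y \in cands P') ->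
  all (fun i => all (fun a => all (fun b => ballot P i a b == ballot P' i a b)
     [:: x; y]) [:: x; y]) (voters P) -> restr_eq P P' x y.
Proof.
move=> h1 h2 h3 h4; split => //; first by rewrite h1.
move=> i a b hi ha hb _ _.
exact: (eqP (allP (allP (allP h4 i hi) a ha) b hb)).
Qed.

Lemma wc_help P x y : 0 < margin P x y ->
  all (fun z => margin P y z <= margin P x z) (cands P) -> wc P x y.
Proof. by move=> h1 h2; split => // z hz; apply: (allP h2). Qed.

Lemma not_sc P x y s : majority_path P y s x ->
  ~~ (strength P y s < margin P x y) -> ~ sc P x y.
Proof. by move=> hm hn [_ /(_ s hm) h]; rewrite h in hn. Qed.

Lemma not_wc P x y z : z \in cands P ->
  ~~ (margin P y z <= margin P x z) -> ~ wc P x y.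
Proof. by move=> hz hn [_ /(_ z hz) h]; rewrite h in hn. Qed.

Lemma scwc_pos P x y : scwc P x y -> 0 < margin P x y.
Proof. by case=> -[]. Qed.

Lemma mp_help P a s b :
  [&& a \in cands P, all (fun c => c \in cands P) s,
      path (fun u v => 0 < margin P u v) a s, s != [::] & last a s == b] ->
  majority_path P a s b.
Proof. by case/and5P => h1 h2 h3 h4 /eqP h5; split. Qed.

Lemma scwc_P0 : scwc P0 0 1.
Proof. right; apply: wc_help; vmc. Qed.

Lemma not_scwc_P1 : ~ scwc P1 0 1.
Proof.
case.
  by apply: (@not_sc _ _ _ [:: 3; 2; 0]%N); [apply: mp_help|]; vmc.
by apply: (@not_wc _ _ _ 2%N); vmc.
Qed.

Lemma tr_P1 : transition P0 0 1 P1.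
Proof.
split; first by apply: re_help => //; vmc.
apply: go_help; [by move=> a | vmc | vmc | vmc].
Qed.

Lemma tr_Q2 : transition P0 2 1 Q2.
Proof.
split; first by apply: re_help => //; vmc.
apply: go_help; [ | vmc | vmc | vmc].
by move=> a; rewrite !inE => /or3P [] /eqP ->.
Qed.

Lemma tr_Q3 : transition P0 3 1 Q3.
Proof.
split; first by apply: re_help => //; vmc.
apply: go_help; [ | vmc | vmc | vmc].
by move=> a; rewrite !inE => /orP [] /eqP ->.
Qed.

Lemma tr_Q1 : transition P0 1 1 Q1.
Proof.
split; first by apply: re_help => //; vmc.
apply: go_help; [ | vmc | vmc | vmc].
by move=> a; rewrite !inE => /eqP ->.
Qed.

Theorem proposition8p4 :
  ~ coherent_IIA_VCCR scwc /\ ~ coherent_IIA_VSCC scwc_bar.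
Proof.
split.
  by move=> H; apply: not_scwc_P1; apply: (H P0 P1 0%N 1%N scwc_P0 tr_P1).
move=> H.
have [x [hx Hx]] : exists x, x \in cands P0 /\
      forall P', transition P0 x 1 P' -> ~ scwc_bar P' 1.
  by apply: H => //; case=> _; apply; exists 0%N; apply: scwc_P0.
move: hx; rewrite /P0 /= !inE => /or4P [] /eqP hx; subst x.
- apply: (Hx P1 tr_P1); split => //; case=> x' hs.
  case/andP: (pos_in (scwc_pos hs)); rewrite /= !inE => + _ => /or4P [] /eqP hx; subst x'.
  + by apply: not_scwc_P1.
  + by move: (scwc_pos hs); vmf.
  + by move: (scwc_pos hs); vmf.
  + by move: (scwc_pos hs); vmf.
- apply: (Hx Q1 tr_Q1); split => //; case=> x' hs.
  case/andP: (pos_in (scwc_pos hs)); rewrite /= !inE => + _ => /eqP hx; subst x'.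
  by move: (scwc_pos hs); vmf.
- apply: (Hx Q2 tr_Q2); split => //; case=> x' hs.
  case/andP: (pos_in (scwc_pos hs)); rewrite /= !inE => + _ => /or3P [] /eqP hx; subst x'.
  + by move: (scwc_pos hs); vmf.
  + case: hs.
      by apply: (@not_sc _ _ _ [:: 3; 2]%N); [apply: mp_help|]; vmc.
    by apply: (@not_wc _ _ _ 3%N); vmc.
  + by move: (scwc_pos hs); vmf.
- apply: (Hx Q3 tr_Q3); split => //; case=> x' hs.
  case/andP: (pos_in (scwc_pos hs)); rewrite /= !inE => + _ => /orP [] /eqP hx; subst x'.
  + by move: (scwc_pos hs); vmf.
  + by move: (scwc_pos hs); vmf.
Qed.
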